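(* The object $D_0$ is a terminal object of $\widetilde{\Theta}$.
   Context: $\mathbb{G}$ is the category generated by objects $D_i$ ($i\ge0$) and $\sigma_i,\tau_i:D_{i-1}\to D_i$ with $\sigma_{i+1}\sigma_i=\tau_{i+1}\sigma_i$, $\sigma_{i+1}\tau_i=\tau_{i+1}\tau_i$. Globular sums $D_{i_1}\amalg_{D_{i'_1}}\cdots\amalg_{D_{i'_{n-1}}}D_{i_n}$ ($i_k>i'_k<i_{k+1}$) are the colimits of the zigzags $D_{i_1}\xleftarrow{\sigma}D_{i'_1}\xrightarrow{\tau}D_{i_2}\leftarrow\cdots$ of iterated sources and targets; $\Theta_0$ is the free globular extension on $\mathbb{G}$. $\widetilde{\Theta}$ is the universal groupoidal globular extension, i.e. the universal category under $\Theta_0$ in which globular sums exist, equipped with morphisms $\nabla^i_j:D_i\to D_i\amalg_{D_j}D_i$, $\kappa_i:D_{i+1}\to D_i$, $\omega^i_j:D_i\to D_i$ ($i>j\ge0$) having the expected sources and targets and satisfying the identities dual to the axioms of strict $\infty$-groupoids (associativity, exchange, units, functoriality of units, inverses); $D_0$ denotes the image of $D_0\in\mathbb{G}$ in $\widetilde{\Theta}$. *)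

(* Defs.v *)
From mathcomp Require Import all_boot.
Set Implicit Arguments. Unset Strict Implicit. Unset Printing Implicit Defensive.

Record Category := {
  Ob :> Type;
  hom : Ob -> Ob -> Type;
  idm : forall a, hom a a;
  comp : forall a b c, hom b c -> hom a b -> hom a c;
  compA : forall a b c d (f : hom a b) (g : hom b c) (h : hom c d),
      comp h (comp g f) = comp (comp h g) f;
  comp1m : forall a b (f : hom a b), comp (idm b) f = f;
  compm1 : forall a b (f : hom a b), comp f (idm a) = f }.
Arguments hom {_} _ _.
Arguments idm {_} _.
Arguments comp {_ _ _ _} _ _.

Definition is_terminal (C : Category) (x : C) : Prop :=
  forall y : C, exists f : hom y x, forall g : hom y x, g = f.

Record Functor (C C' : Category) := {
  fob : C -> C';
  fhom : forall a b : C, hom a b -> hom (fob a) (fob b);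
  fhom_id : forall a : C, fhom (idm a) = idm (fob a);
  fhom_comp : forall (a b c : C) (f : hom a b) (g : hom b c),
      fhom (comp g f) = comp (fhom g) (fhom f) }.
Arguments fhom {C C'} _ {a b} _.

(* A morphism packed together with its source and target, so that morphisms
   between possibly different objects can be compared by (Leibniz) equality. *)
Definition arr (C : Category) := {ab : C * C & hom ab.1 ab.2}.
Definition pk (C : Category) (a b : C) (f : hom a b) : arr C :=
  existT (fun ab : C * C => hom ab.1 ab.2) (a, b) f.

(* sg i = sigma_{i+1} : D_i -> D_{i+1},  tg i = tau_{i+1}              *)
Record Globular (C : Category) := {
  D : nat -> C;
  sg : forall i, hom (D i) (D i.+1);
  tg : forall i, hom (D i) (D i.+1);
  glob_s : forall i, comp (sg i.+1) (sg i) = comp (tg i.+1) (sg i);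
  glob_t : forall i, comp (sg i.+1) (tg i) = comp (tg i.+1) (tg i) }.

Section Iterated.
Variables (C : Category) (G : Globular C).

Definition castD (i i' : nat) (e : i = i') : hom (D G i) (D G i') :=
  match e in _ = i' return hom (D G i) (D G i') with erefl => idm _ end.

Fixpoint sgn (j n : nat) : hom (D G j) (D G (Nat.add n j)) :=
  match n with 0 => idm _ | n'.+1 => comp (sg G (Nat.add n' j)) (sgn j n') end.
Fixpoint tgn (j n : nat) : hom (D G j) (D G (Nat.add n j)) :=
  match n with 0 => idm _ | n'.+1 => comp (tg G (Nat.add n' j)) (tgn j n') end.

Definition sgm (j i : nat) (H : j <= i) : hom (D G j) (D G i) :=
  comp (@castD (Nat.add (i - j) j) i (subnK H)) (sgn j (i - j)).
Definition tgm (j i : nat) (H : j <= i) : hom (D G j) (D G i) :=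
  comp (@castD (Nat.add (i - j) j) i (subnK H)) (tgn j (i - j)).

(* Tables of globular sums  D_{i_1} amalg_{D_{i'_1}} ... amalg D_{i_n}:
   ds = [:: i_1; ...; i_n], ls = [:: i'_1; ...; i'_{n-1}],
   with i_k > i'_k < i_{k+1}. *)
Definition valid (ds ls : seq nat) : bool :=
  (size ds == (size ls).+1) &&
  [forall k : 'I_(size ls), (nth 0 ls k < nth 0 ds k) && (nth 0 ls k < nth 0 ds k.+1)].

Definition cocone (ds ls : seq nat) (X : C)
    (f : forall k : 'I_(size ds), hom (D G (nth 0 ds k)) X) : Prop :=
  forall (k : nat) (Hk : k.+1 < size ds)
         (H : nth 0 ls k <= nth 0 ds k) (H' : nth 0 ls k <= nth 0 ds k.+1),
    comp (f (Ordinal (ltnW Hk))) (sgm H) = comp (f (Ordinal Hk)) (tgm H').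

End Iterated.
Arguments cocone {C} G {ds} ls {X} f.
Arguments sgm {C} G {j i} H.
Arguments tgm {C} G {j i} H.
Arguments castD {C} G {i i'} e.


Record GlobExt := {
  gcat :> Category;
  gglob : Globular gcat;
  GS : forall ds ls : seq nat, valid ds ls -> gcat;
  inj : forall ds ls (V : valid ds ls) (k : 'I_(size ds)),
      hom (D gglob (nth 0 ds k)) (GS V);
  inj_cocone : forall ds ls (V : valid ds ls), cocone gglob ls (inj V);
  inj_univ : forall ds ls (V : valid ds ls) (X : gcat)
      (f : forall k : 'I_(size ds), hom (D gglob (nth 0 ds k)) X),
      cocone gglob ls f ->
      exists u : hom (GS V) X,
        (forall k, comp u (inj V k) = f k) /\
        (forall v : hom (GS V) X, (forall k, comp v (inj V k) = f k) -> v = u) }.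

(* Groupoidal structure: nabla^i_j, kappa_i, omega^i_j and the axioms  *)
(* dual to those of strict infinity-groupoids.                         *)
(* In D_i amalg_{D_j} D_i, coprojection 0 is glued along its source    *)
(* and plays the role of u in u *_j v, coprojection 1 plays v.        *)
Section GrpLaws.
Variable E : GlobExt.
Local Notation G := (gglob E).
Local Notation DD := (D G).
Variable nab : forall i j (V : valid [:: i; i] [:: j]), hom (DD i) (GS E V).
Variable kap : forall i, hom (DD i.+1) (DD i).
Variable omg : forall i j, j < i -> hom (DD i) (DD i).

Definition ij ds ls (V : valid ds ls) k (H : k < size ds) := inj E V (Ordinal H).
Arguments ij {ds ls} V k H.

Fixpoint kpn (j n : nat) : hom (DD (Nat.add n j)) (DD j) :=
  match n with 0 => idm _ | n'.+1 => comp (kpn j n') (kap (Nat.add n' j)) end.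
Definition kpm (j i : nat) (H : j <= i) : hom (DD i) (DD j) :=
  comp (kpn j (i - j)) (@castD _ G i (Nat.add (i - j) j) (esym (subnK H))).

Definition nab_st_top : Prop :=
  forall j (V : valid [:: j.+1; j.+1] [:: j]),
    comp (nab V) (sg G j) = comp (ij V 1 isT) (sg G j) /\
    comp (nab V) (tg G j) = comp (ij V 0 isT) (tg G j).

Definition nab_st_low : Prop :=
  forall i j (V : valid [:: i.+1; i.+1] [:: j]) (V' : valid [:: i; i] [:: j])
         (ms mt : hom (GS E V') (GS E V)),
    comp ms (ij V' 0 isT) = comp (ij V 0 isT) (sg G i) ->
    comp ms (ij V' 1 isT) = comp (ij V 1 isT) (sg G i) ->
    comp mt (ij V' 0 isT) = comp (ij V 0 isT) (tg G i) ->
    comp mt (ij V' 1 isT) = comp (ij V 1 isT) (tg G i) ->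
    comp (nab V) (sg G i) = comp ms (nab V') /\
    comp (nab V) (tg G i) = comp mt (nab V').

Definition kap_st : Prop :=
  forall i, comp (kap i) (sg G i) = idm _ /\ comp (kap i) (tg G i) = idm _.

Definition omg_st_top : Prop :=
  forall j (H : j < j.+1),
    comp (omg H) (sg G j) = tg G j /\ comp (omg H) (tg G j) = sg G j.

Definition omg_st_low : Prop :=
  forall i j (H : j < i.+1) (H' : j < i),
    comp (omg H) (sg G i) = comp (sg G i) (omg H') /\
    comp (omg H) (tg G i) = comp (tg G i) (omg H').

(* associativity: (u *_j v) *_j w = u *_j (v *_j w) *)
Definition ax_assoc : Prop :=
  forall i j (V2 : valid [:: i; i] [:: j]) (V3 : valid [:: i; i; i] [:: j; j])
         (b b' l r : hom (GS E V2) (GS E V3)),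
    comp b (ij V2 0 isT) = ij V3 0 isT ->
    comp b (ij V2 1 isT) = ij V3 1 isT ->
    comp b' (ij V2 0 isT) = ij V3 1 isT ->
    comp b' (ij V2 1 isT) = ij V3 2 isT ->
    comp l (ij V2 0 isT) = comp b (nab V2) ->
    comp l (ij V2 1 isT) = ij V3 2 isT ->
    comp r (ij V2 0 isT) = ij V3 0 isT ->
    comp r (ij V2 1 isT) = comp b' (nab V2) ->
    comp l (nab V2) = comp r (nab V2).

(* exchange (i > j > k):
   (u *_j v) *_k (u' *_j v') = (u *_k u') *_j (v *_k v') *)
Definition ax_exchange : Prop :=
  forall i j k, k < j ->
  forall (Vj : valid [:: i; i] [:: j]) (Vk : valid [:: i; i] [:: k])
         (V4 : valid [:: i; i; i; i] [:: j; k; j])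
         (p p' R : hom (GS E Vj) (GS E V4)) (m m' L : hom (GS E Vk) (GS E V4)),
    comp p (ij Vj 0 isT) = ij V4 0 isT ->
    comp p (ij Vj 1 isT) = ij V4 1 isT ->
    comp p' (ij Vj 0 isT) = ij V4 2 isT ->
    comp p' (ij Vj 1 isT) = ij V4 3 isT ->
    comp m (ij Vk 0 isT) = ij V4 0 isT ->
    comp m (ij Vk 1 isT) = ij V4 2 isT ->
    comp m' (ij Vk 0 isT) = ij V4 1 isT ->
    comp m' (ij Vk 1 isT) = ij V4 3 isT ->
    comp L (ij Vk 0 isT) = comp p (nab Vj) ->
    comp L (ij Vk 1 isT) = comp p' (nab Vj) ->
    comp R (ij Vj 0 isT) = comp m (nab Vk) ->
    comp R (ij Vj 1 isT) = comp m' (nab Vk) ->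
    comp L (nab Vk) = comp R (nab Vj).

(* units: k^i_j(t^i_j u) *_j u = u = u *_j k^i_j(s^i_j u) *)
Definition ax_units : Prop :=
  forall i j (V : valid [:: i; i] [:: j]) (H : j <= i) (a b : hom (GS E V) (DD i)),
    (comp a (ij V 0 isT) = comp (tgm G H) (kpm H) ->
     comp a (ij V 1 isT) = idm _ ->
     comp a (nab V) = idm _) /\
    (comp b (ij V 0 isT) = idm _ ->
     comp b (ij V 1 isT) = comp (sgm G H) (kpm H) ->
     comp b (nab V) = idm _).

(* functoriality of units: k_i(u *_j v) = k_i(u) *_j k_i(v) *)
Definition ax_unit_funct : Prop :=
  forall i j (V : valid [:: i; i] [:: j]) (V' : valid [:: i.+1; i.+1] [:: j])
         (K : hom (GS E V') (GS E V)),
    comp K (ij V' 0 isT) = comp (ij V 0 isT) (kap i) ->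
    comp K (ij V' 1 isT) = comp (ij V 1 isT) (kap i) ->
    comp K (nab V') = comp (nab V) (kap i).

(* inverses: u *_j w_j(u) = k^i_j(t^i_j u),  w_j(u) *_j u = k^i_j(s^i_j u) *)
Definition ax_inverses : Prop :=
  forall i j (V : valid [:: i; i] [:: j]) (H : j < i) (c c' : hom (GS E V) (DD i)),
    (comp c (ij V 0 isT) = idm _ ->
     comp c (ij V 1 isT) = omg H ->
     comp c (nab V) = comp (tgm G (ltnW H)) (kpm (ltnW H))) /\
    (comp c' (ij V 0 isT) = omg H ->
     comp c' (ij V 1 isT) = idm _ ->
     comp c' (nab V) = comp (sgm G (ltnW H)) (kpm (ltnW H))).

Record GrpLaws : Prop := {
  gax_nab_st_top : nab_st_top;
  gax_nab_st_low : nab_st_low;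
  gax_kap_st : kap_st;
  gax_omg_st_top : omg_st_top;
  gax_omg_st_low : omg_st_low;
  gax_assoc : ax_assoc;
  gax_exchange : ax_exchange;
  gax_units : ax_units;
  gax_unit_funct : ax_unit_funct;
  gax_inverses : ax_inverses }.

End GrpLaws.

Record GrpExt := {
  gext :> GlobExt;
  nab : forall i j (V : valid [:: i; i] [:: j]), hom (D (gglob gext) i) (GS gext V);
  kap : forall i, hom (D (gglob gext) i.+1) (D (gglob gext) i);
  omg : forall i j, j < i -> hom (D (gglob gext) i) (D (gglob gext) i);
  grp_ax : GrpLaws nab kap omg }.

Record GrpMor (T T' : GrpExt) := {
  mF : Functor T T';
  mor_D : forall i, fob mF (D (gglob T) i) = D (gglob T') i;
  mor_sg : forall i, pk (fhom mF (sg (gglob T) i)) = pk (sg (gglob T') i);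
  mor_tg : forall i, pk (fhom mF (tg (gglob T) i)) = pk (tg (gglob T') i);
  mor_GS : forall ds ls (V : valid ds ls), fob mF (GS T V) = GS T' V;
  mor_inj : forall ds ls (V : valid ds ls) k,
      pk (fhom mF (inj T V k)) = pk (inj T' V k);
  mor_nab : forall i j (V : valid [:: i; i] [:: j]),
      pk (fhom mF (nab T V)) = pk (nab T' V);
  mor_kap : forall i, pk (fhom mF (kap T i)) = pk (kap T' i);
  mor_omg : forall i j (H : j < i), pk (fhom mF (omg T H)) = pk (omg T' H) }.

(* T is universal (initial): a unique morphism to every groupoidal extension
   (uniqueness as equality of the underlying functors on all morphisms). *)
Definition is_universal (T : GrpExt) : Prop :=
  forall T' : GrpExt, exists F : GrpMor T T',
    forall F' : GrpMor T T', forall (a b : T) (f : hom a b),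
      pk (fhom (mF F') f) = pk (fhom (mF F) f).

(* Main.v *)
From Pilot Require Import Defs.
From mathcomp Require Import all_boot.
From Stdlib Require Import ProofIrrelevance ClassicalEpsilon Eqdep.
Import Pilot.Defs.
Set Implicit Arguments. Unset Strict Implicit. Unset Printing Implicit Defensive.

Section Basic.
Variable T : GrpExt.
Local Notation C := (gcat (gext T)).
Local Notation G := (gglob T).
Local Notation DD := (D (gglob T)).

Fixpoint K (i : nat) : hom (DD i) (DD 0) :=
  match i with 0 => idm _ | i'.+1 => comp (K i') (kap T i') end.

Lemma kapS i : comp (kap T i) (sg G i) = idm _.
Proof. by case: (gax_kap_st (grp_ax T) i). Qed.
Lemma kapT i : comp (kap T i) (tg G i) = idm _.
Proof. by case: (gax_kap_st (grp_ax T) i). Qed.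

Lemma K_sgn j n : comp (K (Nat.add n j)) (sgn G j n) = K j.
Proof.
elim: n => [|n IH] /=; first by rewrite compm1.
by rewrite compA -(compA (sg G _)) kapS compm1.
Qed.
Lemma K_tgn j n : comp (K (Nat.add n j)) (tgn G j n) = K j.
Proof.
elim: n => [|n IH] /=; first by rewrite compm1.
by rewrite compA -(compA (tg G _)) kapT compm1.
Qed.
Lemma K_cast a b (e : a = b) : comp (K b) (castD G e) = K a.
Proof. by case: b / e; rewrite /= compm1. Qed.
Lemma K_sgm j i (H : j <= i) : comp (K i) (sgm G H) = K j.
Proof. by rewrite /sgm compA K_cast K_sgn. Qed.
Lemma K_tgm j i (H : j <= i) : comp (K i) (tgm G H) = K j.
Proof. by rewrite /tgm compA K_cast K_tgn. Qed.
Lemma K_kpn j n : comp (K j) (kpn (kap T) j n) = K (Nat.add n j).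
Proof.
elim: n => [|n IH] /=; first by rewrite compm1.
by rewrite compA IH.
Qed.
Lemma K_kpm j i (H : j <= i) : comp (K j) (kpm (kap T) H) = K i.
Proof. by rewrite /kpm compA K_kpn K_cast. Qed.

Lemma kpn_sgn j n : comp (kpn (kap T) j n) (sgn G j n) = idm _.
Proof.
elim: n => [|n IH] /=; first by rewrite compm1.
by rewrite -compA (compA (sgn G j n)) kapS comp1m.
Qed.
Lemma kpn_tgn j n : comp (kpn (kap T) j n) (tgn G j n) = idm _.
Proof.
elim: n => [|n IH] /=; first by rewrite compm1.
by rewrite -compA (compA (tgn G j n)) kapT comp1m.
Qed.
Lemma cast_gen2 n j i (e : Nat.add n j = i) (X Y : C) (f : hom (DD (Nat.add n j)) Y) (g : hom X (DD (Nat.add n j))) :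
  comp (comp f (castD G (esym e))) (comp (castD G e) g) = comp f g.
Proof. by case: i / e => /=; rewrite compm1 comp1m. Qed.
Lemma kpm_sgm j i (H : j <= i) : comp (kpm (kap T) H) (sgm G H) = idm _.
Proof. by rewrite /kpm /sgm cast_gen2 kpn_sgn. Qed.
Lemma kpm_tgm j i (H : j <= i) : comp (kpm (kap T) H) (tgm G H) = idm _.
Proof. by rewrite /kpm /tgm cast_gen2 kpn_tgn. Qed.

Lemma omg_sgn_core n j (H : j < Nat.add n.+1 j) :
  comp (omg T H) (sgn G j n.+1) = tgn G j n.+1.
Proof.
elim: n H => [|n IH] H /=.
  rewrite !compm1; by case: (gax_omg_st_top (grp_ax T) H).
have H' : j < Nat.add n.+1 j by rewrite plusE addSn ltnS leq_addl.
have [Hs _] := gax_omg_st_low (grp_ax T) H H'.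
rewrite compA Hs -compA.
move: (IH H') => /= ->.
rewrite !compA; apply: (f_equal (fun h => comp h (tgn G j n))); exact: glob_t.
Qed.

Lemma omg_sgm j i (H : j < i) (H0 : j <= i) : comp (omg T H) (sgm G H0) = tgm G H0.
Proof.
rewrite /sgm /tgm; move: (subnK H0).
case E: (i - j) => [|n] e.
  by move/eqP: E; rewrite subn_eq0 leqNgt H.
case: i / e H H0 E => H H0 E /=.
by rewrite !comp1m omg_sgn_core.
Qed.

Lemma GS_epi ds ls (V : valid ds ls) (X : C) (u v : hom (GS T V) X) :
  (forall k, comp u (inj T V k) = comp v (inj T V k)) -> u = v.
Proof.
move=> Huv.
have cu : cocone G ls (fun k => comp u (inj T V k)).
  move=> k Hk H H'; by rewrite -!compA (inj_cocone T V).
have [w [_ Hw]] := inj_univ V cu.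
by rewrite (Hw u (fun _ => erefl)) (Hw v (fun k => esym (Huv k))).
Qed.

Lemma I2_case (P : 'I_2 -> Prop) :
  P (Ordinal (isT : 0 < 2)) -> P (Ordinal (isT : 1 < 2)) -> forall k, P k.
Proof.
move=> P0 P1 [[|[|m]] p] //.
- by rewrite (bool_irrelevance p isT).
- by rewrite (bool_irrelevance p isT).
Qed.

Definition pair2 i (X : C) (f0 f1 : hom (DD i) X) :
  forall k : 'I_(size [:: i; i]), hom (DD (nth 0 [:: i; i] k)) X :=
  fun k => match k with Ordinal m _ =>
    match m return hom (DD (nth 0 [:: i; i] m)) X with
    | 0 => f0 | 1 => f1 | n0.+2 => comp f1 (comp (sgm G (leq0n i)) (castD G (nth_nil 0 n0))) end end.

Lemma exists_pair2 i j (V : valid [:: i; i] [:: j]) (X : C) (f0 f1 : hom (DD i) X) :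
  (forall H : j <= i, comp f0 (sgm G H) = comp f1 (tgm G H)) ->
  exists u : hom (GS T V) X, comp u (ij T V (k:=0) isT) = f0 /\ comp u (ij T V (k:=1) isT) = f1.
Proof.
move=> Hf.
have cc : cocone G [:: j] (pair2 f0 f1).
  move=> [|k] Hk H H' //=.
  move: H H' => /= H H'; rewrite (bool_irrelevance H' H); exact: Hf.
have [u [Hu _]] := inj_univ V cc.
by exists u; split; rewrite /ij Hu.
Qed.

Lemma valid2 i j : j < i -> valid [:: i; i] [:: j].
Proof.
move=> H; apply/andP; split => //; apply/forallP => k.
by rewrite (ord1 k) /= H.
Qed.

Lemma K_omg j i (H : j < i) : comp (K i) (omg T H) = K i.
Proof.
have V := valid2 H.
have H0 : j <= i := ltnW H.
have hb : forall H1 : j <= i, comp (idm (DD i)) (sgm G H1) = comp (comp (sgm G H0) (kpm (kap T) H0)) (tgm G H1).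
  move=> H1; rewrite (bool_irrelevance H1 H0) -compA kpm_tgm compm1 comp1m //.
have [b [b0 b1]] := exists_pair2 V hb.
have hc : forall H1 : j <= i, comp (omg T H) (sgm G H1) = comp (idm (DD i)) (tgm G H1).
  move=> H1; by rewrite omg_sgm comp1m.
have [c [c0 c1]] := exists_pair2 V hc.
have [_ Hb] := gax_units (grp_ax T) H0 b b.
have [_ Hc] := gax_inverses (grp_ax T) H c c.
have E : comp (comp (K i) (omg T H)) b = comp (K i) c.
  apply: GS_epi; elim/I2_case.
    by rewrite -[LHS]compA b0 compm1 -[RHS]compA c0.
  rewrite -[LHS]compA b1 -[RHS]compA c1 compm1.
  by rewrite compA -(compA _ (omg T H)) omg_sgm K_tgm K_kpm.
rewrite -[LHS]compm1 -(Hb b0 b1) compA E -compA (Hc c0 c1).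
by rewrite compA K_sgm K_kpm.
Qed.

Lemma K_cocone ds ls : cocone G ls (fun k : 'I_(size ds) => K (nth 0 ds k)).
Proof. by move=> k Hk H H' /=; rewrite K_sgm K_tgm. Qed.

Definition KGS ds ls (V : valid ds ls) : hom (GS T V) (DD 0) :=
  proj1_sig (constructive_indefinite_description _ (inj_univ V (@K_cocone ds ls))).

Lemma KGS_inj ds ls (V : valid ds ls) k : comp (KGS V) (inj T V k) = K (nth 0 ds k).
Proof.
rewrite /KGS; case: constructive_indefinite_description => u [Hu _] /=.
exact: Hu.
Qed.

Lemma KGS_nab i j (V : valid [:: i; i] [:: j]) : comp (KGS V) (nab T V) = K i.
Proof.
have H0 : j <= i.
  by move: V => /andP [_ /forallP /(_ ord0) /andP [/ltnW]].
have hb : forall H1 : j <= i, comp (idm (DD i)) (sgm G H1) = comp (comp (sgm G H0) (kpm (kap T) H0)) (tgm G H1).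
  move=> H1; rewrite (bool_irrelevance H1 H0) -compA kpm_tgm compm1 comp1m //.
have [b [b0 b1]] := exists_pair2 V hb.
have [_ Hb] := gax_units (grp_ax T) H0 b b.
have E : KGS V = comp (K i) b.
  apply: GS_epi; elim/I2_case.
    by rewrite KGS_inj -compA b0 compm1.
  by rewrite KGS_inj -compA b1 compA K_sgm K_kpm.
by rewrite E -compA (Hb b0 b1) compm1.
Qed.
End Basic.

Section Slice.
Variable T : GrpExt.
Local Notation C := (gcat (gext T)).
Local Notation G := (gglob T).
Local Notation DD := (D (gglob T)).

Definition SOb := {x : C & hom x (DD 0)}.
Definition Shom (a b : SOb) := {f : hom (projT1 a) (projT1 b) | comp (projT2 b) f = projT2 a}.
Definition Sid (a : SOb) : Shom a a := exist _ (idm _) (compm1 _).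
Definition Scomp (a b c : SOb) (g : Shom b c) (f : Shom a b) : Shom a c.
Proof.
exists (comp (sval g) (sval f)).
by rewrite compA (proj2_sig g) (proj2_sig f).
Defined.
Lemma Sext a b (f g : Shom a b) : sval f = sval g -> f = g.
Proof.
case: f => f pf; case: g => g pg /= E; subst g; f_equal; apply: proof_irrelevance.
Qed.

Definition SCat : Category.
Proof.
refine (@Build_Category SOb Shom Sid Scomp _ _ _).
- move=> a b c d f g h; apply: Sext => /=; exact: compA.
- move=> a b f; apply: Sext => /=; exact: comp1m.
- move=> a b f; apply: Sext => /=; exact: compm1.
Defined.

Definition SD (i : nat) : SCat := existT _ (DD i) (K T i).
Definition Ssg (i : nat) : @hom SCat (SD i) (SD i.+1).
Proof. exists (sg G i); by rewrite /= -compA (kapS T) compm1. Defined.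
Definition Stg (i : nat) : @hom SCat (SD i) (SD i.+1).
Proof. exists (tg G i); by rewrite /= -compA (kapT T) compm1. Defined.

Definition SG : Globular SCat.
Proof.
refine (@Build_Globular SCat SD Ssg Stg _ _).
- move=> i; apply: Sext => /=; exact: glob_s.
- move=> i; apply: Sext => /=; exact: glob_t.
Defined.

Lemma sval_castD a b (e : a = b) : sval (castD SG e) = castD G e.
Proof. by case: b / e. Qed.
Lemma sval_sgn j n : sval (sgn SG j n) = sgn G j n.
Proof. by elim: n => [|n IH] //=; rewrite IH. Qed.
Lemma sval_tgn j n : sval (tgn SG j n) = tgn G j n.
Proof. by elim: n => [|n IH] //=; rewrite IH. Qed.
Lemma sval_sgm j i (H : j <= i) : sval (sgm SG H) = sgm G H.
Proof. by rewrite /sgm /= sval_castD sval_sgn. Qed.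
Lemma sval_tgm j i (H : j <= i) : sval (tgm SG H) = tgm G H.
Proof. by rewrite /tgm /= sval_castD sval_tgn. Qed.

Definition SGS ds ls (V : valid ds ls) : SCat := existT _ (GS T V) (KGS T V).
Definition Sinj ds ls (V : valid ds ls) (k : 'I_(size ds)) :
  @hom SCat (SD (nth 0 ds k)) (SGS V) := exist _ (inj T V k) (KGS_inj T V k).

Lemma Sinj_cocone ds ls (V : valid ds ls) : cocone SG ls (Sinj V).
Proof.
move=> k Hk H H'; apply: Sext => /=.
rewrite ?sval_castD ?sval_sgn ?sval_tgn; exact: inj_cocone.
Qed.

Lemma Sinj_univ ds ls (V : valid ds ls) (X : SCat)
    (f : forall k : 'I_(size ds), @hom SCat (SD (nth 0 ds k)) X) :
    cocone SG ls f ->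
    exists u : @hom SCat (SGS V) X,
      (forall k, comp u (Sinj V k) = f k) /\
      (forall v : @hom SCat (SGS V) X, (forall k, comp v (Sinj V k) = f k) -> v = u).
Proof.
move=> cf.
have cf0 : cocone G ls (fun k => sval (f k)).
  move=> k Hk H H'; have := f_equal (@proj1_sig _ _) (cf k Hk H H').
  by rewrite /= ?sval_castD ?sval_sgn ?sval_tgn.
have [u [Hu Hun]] := inj_univ V cf0.
have pu : comp (projT2 X) u = KGS T V.
  apply: GS_epi => k; by rewrite -compA Hu (KGS_inj T) (proj2_sig (f k)).
exists (exist _ u pu); split.
  by move=> k; apply: Sext => /=; exact: Hu.
move=> v Hv; apply: Sext => /=; apply: Hun => k.
exact: (f_equal (@proj1_sig _ _) (Hv k)).
Qed.

Definition SGE : GlobExt := @Build_GlobExt SCat SG SGS Sinj Sinj_cocone Sinj_univ.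

Definition Snab i j (V : valid [:: i; i] [:: j]) : @hom SCat (SD i) (SGS V) :=
  exist _ (nab T V) (KGS_nab T V).
Definition Skap i : @hom SCat (SD i.+1) (SD i) := exist _ (kap T i) erefl.
Definition Somg i j (H : j < i) : @hom SCat (SD i) (SD i) := exist _ (omg T H) (K_omg T H).

Lemma sval_kpn j n : sval (kpn (E:=SGE) Skap j n) = kpn (kap T) j n.
Proof. by elim: n => [|n IH] //=; rewrite IH. Qed.
Lemma sval_kpm j i (H : j <= i) : sval (kpm (E:=SGE) Skap H) = kpm (kap T) H.
Proof. by rewrite /kpm /= sval_kpn sval_castD. Qed.

End Slice.

Ltac liftall := repeat match goal with
  | H : _ = _ |- _ => apply (f_equal (@proj1_sig _ _)) in H; simpl in H;
      rewrite ?sval_castD ?sval_sgn ?sval_tgn ?sval_kpn in H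
  end.
Ltac lgoal := apply: Sext => /=; rewrite ?sval_castD ?sval_sgn ?sval_tgn ?sval_kpn.

Lemma SLaws (T : GrpExt) : GrpLaws (E:=SGE T) (@Snab T) (@Skap T) (@Somg T).
Proof.
have L := grp_ax T.
constructor.
- move=> j V; have [h1 h2] := gax_nab_st_top L V; split; lgoal; [exact h1|exact h2].
- move=> i j V V' ms mt e1 e2 e3 e4; liftall.
  have [h1 h2] := gax_nab_st_low L e1 e2 e3 e4; split; lgoal; [exact h1|exact h2].
- move=> i; have [h1 h2] := gax_kap_st L i; split; lgoal; [exact h1|exact h2].
- move=> j H; have [h1 h2] := gax_omg_st_top L H; split; lgoal; [exact h1|exact h2].
- move=> i j H H'; have [h1 h2] := gax_omg_st_low L H H'; split; lgoal; [exact h1|exact h2].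
- move=> i j V2 V3 b b' l r e1 e2 e3 e4 e5 e6 e7 e8; liftall; lgoal.
  exact: (gax_assoc L e1 e2 e3 e4 e5 e6 e7 e8).
- move=> i j k Hkj Vj Vk V4 p p' R m m' Lm e1 e2 e3 e4 e5 e6 e7 e8 e9 e10 e11 e12; liftall; lgoal.
  exact: (gax_exchange L Hkj e1 e2 e3 e4 e5 e6 e7 e8 e9 e10 e11 e12).
- move=> i j V H a b; have [h1 h2] := gax_units L H (sval a) (sval b).
  split=> e1 e2; liftall; lgoal; [exact: h1 | exact: h2].
- move=> i j V V' Kf e1 e2; liftall; lgoal; exact: (gax_unit_funct L e1 e2).
- move=> i j V H c c'; have [h1 h2] := gax_inverses L H (sval c) (sval c').
  split=> e1 e2; liftall; lgoal; [exact: h1 | exact: h2].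
Qed.

Definition SGrp (T : GrpExt) : GrpExt := @Build_GrpExt (SGE T) _ _ _ (SLaws T).

Definition UFun (T : GrpExt) : Functor (SGrp T) T.
Proof.
refine (@Build_Functor (SGrp T) T (fun a => projT1 a) (fun a b f => sval f) _ _).
- by [].
- by [].
Defined.

Definition UMor (T : GrpExt) : GrpMor (SGrp T) T.
Proof. by refine (@Build_GrpMor (SGrp T) T (UFun T) _ _ _ _ _ _ _ _). Defined.

Definition IdFun (T : GrpExt) : Functor T T.
Proof. by refine (@Build_Functor T T (fun a => a) (fun a b f => f) _ _). Defined.

Definition IdMor (T : GrpExt) : GrpMor T T.
Proof. by refine (@Build_GrpMor T T (IdFun T) _ _ _ _ _ _ _ _). Defined.

Definition CompFun (A B C : Category) (F : Functor A B) (F' : Functor B C) : Functor A C.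
Proof.
refine (@Build_Functor A C (fun a => fob F' (fob F a)) (fun a b f => fhom F' (fhom F f)) _ _).
- by move=> a; rewrite !fhom_id.
- by move=> a b c f g; rewrite !fhom_comp.
Defined.

Definition marr (A B : Category) (F : Functor A B) (x : arr A) : arr B :=
  pk (fhom F (projT2 x)).

Definition CompMor (A B C : GrpExt) (F : GrpMor A B) (F' : GrpMor B C) : GrpMor A C.
Proof.
refine (@Build_GrpMor A C (CompFun (mF F) (mF F')) _ _ _ _ _ _ _ _).
- by move=> i /=; rewrite (mor_D F) (mor_D F').
- move=> i; rewrite /= -(mor_sg F'); exact: (f_equal (marr (mF F')) (mor_sg F i)).
- move=> i; rewrite /= -(mor_tg F'); exact: (f_equal (marr (mF F')) (mor_tg F i)).
- by move=> ds ls V /=; rewrite (mor_GS F) (mor_GS F').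
- move=> ds ls V k; rewrite /= -(mor_inj F'); exact: (f_equal (marr (mF F')) (mor_inj F V k)).
- move=> i j V; rewrite /= -(mor_nab F'); exact: (f_equal (marr (mF F')) (mor_nab F V)).
- move=> i; rewrite /= -(mor_kap F'); exact: (f_equal (marr (mF F')) (mor_kap F i)).
- move=> i j H; rewrite /= -(mor_omg F'); exact: (f_equal (marr (mF F')) (mor_omg F H)).
Defined.

Lemma pk_rect (C : Category) (z a b : C) (e : a = b) (p : hom a z) :
  pk (eq_rect a (fun x => hom x z) p b e) = pk p.
Proof. by case: b / e. Qed.

Theorem proposition8p1 (T : GrpExt) :
  is_universal T -> is_terminal (D (gglob T) 0).
Proof.
move=> HU y.
have [F _] := HU (SGrp T).
have [F1 HF1] := HU T.
pose UF := CompMor F (UMor T).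
have Hpk : forall (a b : T) (f : hom a b), pk (fhom (mF UF) f) = pk f.
  by move=> a b f; rewrite (HF1 UF) -(HF1 (IdMor T)).
have Ey : projT1 (fob (mF F) y) = y.
  exact: (f_equal (fun x => (projT1 x).1) (Hpk y y (idm y))).
have key : forall g : hom y (D (gglob T) 0),
    pk g = pk (projT2 (fob (mF F) y)).
  move=> g; rewrite -(Hpk _ _ g) /=.
  move: (fhom (mF F) g); rewrite (mor_D F 0) => m.
  have := proj2_sig m; rewrite /= comp1m => ->; by [].
set f := eq_rect _ (fun x => hom x (D (gglob T) 0)) (projT2 (fob (mF F) y)) _ Ey.
have Ef : pk f = pk (projT2 (fob (mF F) y)).
  exact: pk_rect.
exists f => g.
apply: (@Eqdep.EqdepTheory.inj_pair2 _ (fun ab : T * T => hom ab.1 ab.2) (y, D (gglob T) 0)).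
change (pk g = pk f); by rewrite key Ef.
Qed.
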